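(* Let $h_1,h_2,\dots$ be a sequence of positive integers satisfying the repeat property, and let $w>0$. For each $t$ define $f_t:\mathbb{Z}_{\ge0}\to\mathbb{R}$ by $f_t(m)=w$ if $m<h_t$ and $f_t(m)=0$ otherwise, and for a finite interval of times $I$ let $f_I(m)=\sum_{t\in I}f_t(m)$. Then for every finite interval $I$ and every integer $m\ge 2$, $$f_I(m-1)-f_I(m)\ \ge\ f_I(m)-f_I(m+1)-w.$$
   Context: A sequence $h_1,h_2,\dots$ of positive integers has the repeat property if for all $t_1<t_2$ with $h_{t_1}=h_{t_2}$ we have $\{2,3,\dots,h_{t_1}-1\}\subseteq\{h_{t_1+1},h_{t_1+2},\dots,h_{t_2-1}\}$. (Such sequences are exactly the sequences of positions, in the Belady ranking, of requested pages within one weight class; $f_t$ is the cost of a canonical algorithm holding $m$ pages of that class.) *)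

(* Defs.v *)
From mathcomp Require Import all_boot all_order all_algebra.
Set Implicit Arguments. Unset Strict Implicit. Unset Printing Implicit Defensive.
Import Order.TTheory GRing.Theory Num.Theory.

(* The sequence h_1, h_2, ... is a function h : nat -> nat; only the values at
   indices t >= 1 are relevant. *)

(* Repeat property: for all 1 <= t1 < t2 with h t1 = h t2,
   {2, ..., h t1 - 1} is contained in {h (t1+1), ..., h (t2-1)}. *)
Definition repeat_property (h : nat -> nat) : Prop :=
  forall t1 t2 : nat, (1 <= t1)%N -> (t1 < t2)%N -> h t1 = h t2 ->
    forall k : nat, (2 <= k)%N -> (k < h t1)%N ->
      exists t : nat, (t1 < t < t2)%N /\ h t = k.

Local Open Scope ring_scope.

Definition f_t (R : realFieldType) (w : R) (h : nat -> nat) (t m : nat) : R :=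
  if (m < h t)%N then w else 0.

(* f_I(m) for the finite interval of times I = [a, b] = {a, ..., b}
   (empty if b < a). *)
Definition f_I (R : realFieldType) (w : R) (h : nat -> nat) (a b m : nat) : R :=
  \sum_(a <= t < b.+1) f_t w h t m.

(* Main.v *)
Require Import Defs.
From mathcomp Require Import all_boot all_order all_algebra.
From mathcomp Require Import zify.
Import Order.TTheory GRing.Theory Num.Theory.

Definition cnt (h : nat -> nat) (k lo hi : nat) : nat :=
  \sum_(lo <= t < hi) (h t == k : nat).

Lemma cnt_key (h : nat -> nat) (hrep : repeat_property h) (a m : nat)
  (ha : 1 <= a) (hm : 2 <= m) :
  forall hi, cnt h m.+1 a hi <= cnt h m a hi + 1.
Proof.
move=> hi; elim: hi {-2}hi (leqnn hi) => [|N IH] hi Hhi.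
  by rewrite leqn0 in Hhi; move/eqP: Hhi => ->; rewrite /cnt big_geq.
case: hi Hhi => [|n] Hn; first by rewrite /cnt big_geq.
case: (leqP a n) => Han; last first.
  by rewrite /cnt big_geq.
rewrite /cnt !big_nat_recr //=.
case: (eqVneq (h n) m.+1) => Hn1; last first.
  have := IH n Hn; rewrite /cnt; case: (h n == m) => /=; lia.
rewrite Hn1 ?eqxx /=.
have Hmm : (m.+1 == m) = false by lia.
rewrite ?Hmm.
pose P t := (a <= t < n) && (h t == m.+1).
case: (boolP [exists t : 'I_n, P t]) => Hex; last first.
  have -> : \sum_(a <= i < n) (h i == m.+1 : nat) = 0.
    apply/eqP; rewrite sum_nat_seq_eq0; apply/allP => t; rewrite mem_iota => Ht /=.
    apply/implyP => Ht'.
    move/negP: Hex; apply; apply/existsP.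
    have Htn : t < n by lia.
    have Ht2 : h t == m.+1 by move: Ht'; case: (h t == m.+1) => //=; apply.
    exists (Ordinal Htn); rewrite /P /= Ht2 andbT; lia.
  by rewrite add0n leq_addl.
have exP : exists i, P i by case/existsP: Hex => t Ht; exists (nat_of_ord t).
have ubP : forall i, P i -> i <= n by move=> i /andP[]; lia.
case: (ex_maxnP exP ubP) => t1 /andP[Ht1 Ht1e] Hmax.
move/eqP: Ht1e => Ht1e.
have [t [Htt Hte]] : exists t, (t1 < t < n) /\ h t = m.
  apply: (hrep t1 n); try lia; by rewrite Ht1e ?Hn1.
rewrite !(@big_cat_nat _ _ _ t1.+1 a n) //; try lia.
have -> : \sum_(t1.+1 <= i < n) (h i == m.+1 : nat) = 0.
  apply/eqP; rewrite sum_nat_seq_eq0; apply/allP => s; rewrite mem_iota => Hs /=.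
  apply/implyP => Hs0.
  have Hs' : h s == m.+1 by move: Hs0; case: (h s == m.+1) => //=; apply.
  have : s <= t1 by apply: Hmax; rewrite /P Hs'; apply/andP; split; [lia|].
  lia.
have H1 : 0 < \sum_(t1.+1 <= i < n) (h i == m : nat).
  rewrite lt0n sum_nat_seq_neq0; apply/hasP; exists t.
    rewrite mem_iota; lia.
  by rewrite /= Hte eqxx.
have := IH t1.+1 ltac:(lia); rewrite /cnt. move=> HI /=. lia.
Qed.

Local Open Scope ring_scope.

Lemma fdiff (R : realFieldType) (h : nat -> nat) (w : R) (a b m : nat) :
  (1 <= m)%N ->
  f_I w h a b m.-1 - f_I w h a b m = (cnt h m a b.+1)%:R * w.
Proof.
move=> Hm; rewrite /f_I /cnt -sumrB natr_sum mulr_suml.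
apply: eq_bigr => t _; rewrite /f_t.
case: (ltnP m.-1 (h t)) => H1; case: (ltnP m (h t)) => H2;
  case: (eqVneq (h t) m) => H3 /=; rewrite ?mul0r ?mul1r ?subrr ?subr0 //; lia.
Qed.

Theorem lemma6 (R : realFieldType) (h : nat -> nat) (w : R)
  (hpos : forall t : nat, (1 <= t)%N -> (0 < h t)%N)
  (hrep : repeat_property h)
  (wpos : 0 < w)
  (a b : nat) (ha : (1 <= a)%N)
  (m : nat) (hm : (2 <= m)%N) :
  f_I w h a b m.-1 - f_I w h a b m >= f_I w h a b m - f_I w h a b m.+1 - w.
Proof.
rewrite fdiff; last by lia.
have := @fdiff R h w a b m.+1 isT; rewrite /= => ->.
rewrite lerBlDr.
have -> : (cnt h m a b.+1)%:R * w + w = (cnt h m a b.+1 + 1)%:R * w :> R.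
  by rewrite natrD mulrDl mul1r.
rewrite ler_pM2r // ler_nat.
exact: cnt_key.
Qed.
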